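(* For any $f\in\mathcal{C}(I)$ and integers $m,n\ge0$, $$\operatorname{dist}\big(f,\mathcal{R}^\alpha_{mn}(I)\big)\le\operatorname{dist}\big(f,\mathcal{R}_{mn}(I)\big)+\frac{|\alpha|_\infty}{1-|\alpha|_\infty}\|Id-L\|\Big(\operatorname{dist}\big(f,\mathcal{R}_{mn}(I)\big)+\|f\|_\infty\Big).$$
   Context: $I=[x_0,x_N]$ is a compact interval, $\mathcal{C}(I)$ the real continuous functions with sup norm, $\Delta=\{x_0<x_1<\dots<x_N\}$, $N\ge2$, $I_i=[x_{i-1},x_i]$, $L_i(x)=a_ix+b_i$ the affine map of $I$ onto $I_i$ with $L_i(x_0)=x_{i-1}$, $L_i(x_N)=x_i$; $\alpha\in(-1,1)^N$, $|\alpha|_\infty=\max_i|\alpha_i|$. For $f,b\in\mathcal{C}(I)$ with $b(x_0)=f(x_0)$, $b(x_N)=f(x_N)$, $f^\alpha_{\Delta,b}$ is the unique $g\in\mathcal{C}(I)$ with $g(x)=f(x)+\alpha_i(g-b)(L_i^{-1}(x))$ for $x\in I_i$. $L:\mathcal{C}(I)\to\mathcal{C}(I)$ is bounded linear with $(Lf)(x_0)=f(x_0)$, $(Lf)(x_N)=f(x_N)$, and $\mathcal{F}^\alpha_{\Delta,L}(f)=f^\alpha_{\Delta,Lf}$. $\mathcal{P}_k(I)$ is the space of real algebraic polynomials of degree $\le k$; $\mathcal{R}_{mn}(I)=\{p/q:p\in\mathcal{P}_m(I),q\in\mathcal{P}_n(I),q>0\text{ on }I\}$; $\mathcal{R}^\alpha_{mn}(I)=\mathcal{F}^\alpha_{\Delta,L}(\mathcal{R}_{mn}(I))$;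 $\operatorname{dist}(f,S)=\inf\{\|f-s\|_\infty:s\in S\}$. *)

(* Defs.v *)
From Stdlib Require Import Reals Lra Lia ClassicalEpsilon.
Open Scope R_scope.

(* Supremum of a set of reals (0 if empty or unbounded above). *)
Definition Rsup (E : R -> Prop) : R :=
  match excluded_middle_informative (bound E /\ exists y, E y) with
  | left H => proj1_sig (completeness E (proj1 H) (proj2 H))
  | right _ => 0
  end.

(* Infimum of a set of reals (0 if empty or unbounded below). *)
Definition Rinf (E : R -> Prop) : R := - Rsup (fun y => E (- y)).

(* Functions on I = [a,b] are represented by R -> R; only values on I matter. *)
Definition in_I (a b t : R) : Prop := a <= t <= b.

Definition cont_on (a b : R) (g : R -> R) : Prop :=
  forall t, in_I a b t -> forall eps, 0 < eps ->
    exists delta, 0 < delta /\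
      forall s, in_I a b s -> Rabs (s - t) < delta -> Rabs (g s - g t) < eps.

Definition supnorm (a b : R) (g : R -> R) : R :=
  Rsup (fun y => exists t, in_I a b t /\ y = Rabs (g t)).

Definition distS (a b : R) (f : R -> R) (S : (R -> R) -> Prop) : R :=
  Rinf (fun y => exists s, S s /\ y = supnorm a b (fun t => f t - s t)).

Definition opnorm_IdmL (a b : R) (L : (R -> R) -> (R -> R)) : R :=
  Rsup (fun y => exists g, cont_on a b g /\ supnorm a b g <= 1 /\
                   y = supnorm a b (fun t => g t - L g t)).

Definition admissible_L (a b : R) (L : (R -> R) -> (R -> R)) : Prop :=
  (forall g, cont_on a b g -> cont_on a b (L g)) /\
  (forall g h, cont_on a b g -> cont_on a b h ->
     (forall t, in_I a b t -> g t = h t) ->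
     forall t, in_I a b t -> L g t = L h t) /\
  (forall g h, cont_on a b g -> cont_on a b h ->
     forall t, in_I a b t -> L (fun s => g s + h s) t = L g t + L h t) /\
  (forall c g, cont_on a b g ->
     forall t, in_I a b t -> L (fun s => c * g s) t = c * L g t) /\
  (exists K, forall g, cont_on a b g -> supnorm a b (L g) <= K * supnorm a b g) /\
  (forall g, cont_on a b g -> L g a = g a /\ L g b = g b).

Definition is_poly (k : nat) (p : R -> R) : Prop :=
  exists c : nat -> R, forall t, p t = sum_f_R0 (fun j => c j * t ^ j) k.

Definition Rat (a b : R) (m n : nat) (r : R -> R) : Prop :=
  exists p q, is_poly m p /\ is_poly n q /\
    (forall t, in_I a b t -> 0 < q t) /\
    (forall t, in_I a b t -> r t = p t / q t).

Definition partition (N : nat) (x : nat -> R) : Prop :=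
  forall i, (i < N)%nat -> x i < x (S i).

Definition alpha_ok (N : nat) (alpha : nat -> R) : Prop :=
  forall i, (1 <= i <= N)%nat -> -1 < alpha i < 1.

Fixpoint alpha_max (alpha : nat -> R) (k : nat) : R :=
  match k with
  | O => 0
  | S j => Rmax (alpha_max alpha j) (Rabs (alpha (S j)))
  end.

(* inverse of the affine map L_i : I -> I_i, L_i(x_0)=x_{i-1}, L_i(x_N)=x_i *)
Definition Linv (N : nat) (x : nat -> R) (i : nat) (y : R) : R :=
  x 0%nat + (y - x (pred i)) * (x N - x 0%nat) / (x i - x (pred i)).

Definition is_fractal (N : nat) (x : nat -> R) (alpha : nat -> R)
    (f bb g : R -> R) : Prop :=
  cont_on (x 0%nat) (x N) g /\
  forall i, (1 <= i <= N)%nat -> forall y, x (pred i) <= y <= x i ->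
    g y = f y + alpha i * (g (Linv N x i y) - bb (Linv N x i y)).

Definition Rat_alpha (N : nat) (x : nat -> R) (alpha : nat -> R)
    (L : (R -> R) -> (R -> R)) (m n : nat) (g : R -> R) : Prop :=
  exists r, Rat (x 0%nat) (x N) m n r /\ is_fractal N x alpha r (L r) g.

(* Main.v *)
Require Import Defs.
From Stdlib Require Import Reals Lra Lia ClassicalEpsilon.
Open Scope R_scope.

Lemma cpt_intro (f : R -> R) x :
  (forall eps, 0 < eps -> exists d, 0 < d /\ forall y, Rabs (y - x) < d -> Rabs (f y - f x) < eps) ->
  continuity_pt f x.
Proof.
  intros H eps He. destruct (H eps He) as [d [Hd Hy]]. exists d; split; [lra|].
  intros y [_ Hy2]. apply Hy. exact Hy2.
Qed.

Lemma cpt_elim (f : R -> R) x : continuity_pt f x ->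
  forall eps, 0 < eps -> exists d, 0 < d /\ forall y, Rabs (y - x) < d -> Rabs (f y - f x) < eps.
Proof.
  intros H eps He. destruct (H eps He) as [d [Hd Hy]]. exists d; split; [lra|].
  intros y Hyd. destruct (Req_dec y x) as [->|Hne].
  - unfold Rminus; rewrite Rplus_opp_r, Rabs_R0; lra.
  - apply (Hy y). split; [split; [exact I| congruence] | exact Hyd].
Qed.

Lemma cont_ext (f g : R -> R) : (forall y, f y = g y) -> continuity f -> continuity g.
Proof.
  intros H Hf x. apply (continuity_pt_locally_ext f g 1 x); [lra| intros; apply H | apply Hf].
Qed.

Lemma cont_id : continuity (fun y => y).
Proof. intro x; apply cpt_intro; intros eps He; exists eps; split; auto. Qed.

Lemma cont_cst c : continuity (fun _ => c).
Proof. apply continuity_const. intros a b; reflexivity. Qed.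

Lemma cont_plus (f g : R -> R) : continuity f -> continuity g -> continuity (fun y => f y + g y).
Proof. intros. apply (cont_ext (f + g)%F); [reflexivity| apply continuity_plus; auto]. Qed.
Lemma cont_minus (f g : R -> R) : continuity f -> continuity g -> continuity (fun y => f y - g y).
Proof. intros. apply (cont_ext (f - g)%F); [reflexivity| apply continuity_minus; auto]. Qed.
Lemma cont_mult (f g : R -> R) : continuity f -> continuity g -> continuity (fun y => f y * g y).
Proof. intros. apply (cont_ext (f * g)%F); [reflexivity| apply continuity_mult; auto]. Qed.
Lemma cont_comp (f g : R -> R) : continuity f -> continuity g -> continuity (fun y => g (f y)).
Proof. intros. apply (cont_ext (comp g f)); [reflexivity| apply continuity_comp; auto]. Qed.
Lemma cont_abs (f : R -> R) : continuity f -> continuity (fun y => Rabs (f y)).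
Proof. intros. apply cont_comp; auto. apply Rcontinuity_abs. Qed.
Lemma cont_pow n : continuity (fun y => y ^ n).
Proof. induction n; simpl. apply cont_cst. apply cont_mult; auto. apply cont_id. Qed.

Lemma cont_sum (F : nat -> R -> R) n : (forall j, continuity (F j)) ->
  continuity (fun y => sum_f_R0 (fun j => F j y) n).
Proof. intros H; induction n; simpl. apply H. apply cont_plus; auto. Qed.

Definition clamp (a b t : R) := Rmax a (Rmin b t).

Lemma clamp_in a b t : a <= b -> in_I a b (clamp a b t).
Proof. intros. unfold clamp, in_I, Rmax, Rmin. repeat destruct Rle_dec; lra. Qed.
Lemma clamp_id a b t : in_I a b t -> clamp a b t = t.
Proof. unfold clamp, in_I, Rmax, Rmin. intros. repeat destruct Rle_dec; lra. Qed.
Lemma clamp_lip a b s t : a <= b -> Rabs (clamp a b s - clamp a b t) <= Rabs (s - t).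
Proof. intros. unfold clamp, Rmax, Rmin. repeat destruct Rle_dec; unfold Rabs; repeat destruct Rcase_abs; lra. Qed.
Lemma clamp_lo a b t : a <= b -> t <= a -> clamp a b t = a.
Proof. intros. unfold clamp, Rmax, Rmin. repeat destruct Rle_dec; lra. Qed.
Lemma clamp_hi a b t : a <= b -> b <= t -> clamp a b t = b.
Proof. intros. unfold clamp, Rmax, Rmin. repeat destruct Rle_dec; lra. Qed.

Lemma cont_on_clamp a b g : a <= b -> cont_on a b g -> continuity (fun t => g (clamp a b t)).
Proof.
  intros Hab H x. apply cpt_intro. intros eps He.
  destruct (H (clamp a b x) (clamp_in a b x Hab) eps He) as [d [Hd Hs]].
  exists d; split; auto. intros y Hy. apply Hs. apply clamp_in; auto.
  eapply Rle_lt_trans; [apply clamp_lip; auto| exact Hy].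
Qed.

Lemma clamp_cont_on a b g : continuity (fun t => g (clamp a b t)) -> cont_on a b g.
Proof.
  intros H t Ht eps He. destruct (cpt_elim _ _ (H t) eps He) as [d [Hd Hs]].
  exists d; split; auto. intros s Hs1 Hs2. specialize (Hs s Hs2).
  rewrite !clamp_id in Hs; auto.
Qed.

Lemma cont_cont_on a b g : continuity g -> cont_on a b g.
Proof.
  intros H t Ht eps He. destruct (cpt_elim _ _ (H t) eps He) as [d [Hd Hs]].
  exists d; split; auto.
Qed.

Lemma cont_on_ext a b f g : (forall t, in_I a b t -> f t = g t) -> cont_on a b f -> cont_on a b g.
Proof.
  intros E H t Ht eps He. destruct (H t Ht eps He) as [d [Hd Hs]].
  exists d; split; auto. intros s Hs1 Hs2. rewrite <- !E; auto.
Qed.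

Lemma cont_on_bounded a b g : a <= b -> cont_on a b g -> exists M, forall t, in_I a b t -> Rabs (g t) <= M.
Proof.
  intros Hab H. destruct (continuity_ab_maj (fun t => Rabs (g (clamp a b t))) a b Hab) as [c [Hc _]].
  { intros; apply cont_abs, cont_on_clamp; auto. }
  exists (Rabs (g (clamp a b c))). intros t Ht. specialize (Hc t Ht). simpl in Hc.
  rewrite clamp_id in Hc; auto.
Qed.

Lemma Rsup_ub (E : R -> Prop) y : bound E -> E y -> y <= Rsup E.
Proof.
  intros Hb Hy. unfold Rsup. destruct excluded_middle_informative as [H|H].
  - destruct (completeness E (proj1 H) (proj2 H)) as [s [Hs1 Hs2]]. simpl. apply Hs1; auto.
  - exfalso. apply H. split; eauto.
Qed.

Lemma Rsup_lub (E : R -> Prop) M : (exists y, E y) -> (forall y, E y -> y <= M) -> Rsup E <= M.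
Proof.
  intros He Hm. unfold Rsup. destruct excluded_middle_informative as [H|H].
  - destruct (completeness E (proj1 H) (proj2 H)) as [s [Hs1 Hs2]]. simpl. apply Hs2. intros y Hy; auto.
  - exfalso. apply H. split; auto. exists M. intros y Hy; auto.
Qed.

Lemma Rsup_ge0 (E : R -> Prop) : (forall y, E y -> 0 <= y) -> 0 <= Rsup E.
Proof.
  intros H. unfold Rsup. destruct excluded_middle_informative as [Hx|Hx]; [|lra].
  destruct (completeness E (proj1 Hx) (proj2 Hx)) as [s [Hs1 Hs2]]. simpl.
  destruct (proj2 Hx) as [y Hy]. apply Rle_trans with y; auto.
Qed.

Lemma Rinf_lb (E : R -> Prop) m y : (forall z, E z -> m <= z) -> E y -> Rinf E <= y.
Proof.
  intros Hm Hy. unfold Rinf. cut (- y <= Rsup (fun z => E (- z))); [lra|].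
  apply Rsup_ub. exists (- m). intros z Hz. specialize (Hm _ Hz); lra.
  rewrite Ropp_involutive; auto.
Qed.

Lemma Rinf_glb (E : R -> Prop) m : (exists y, E y) -> (forall z, E z -> m <= z) -> m <= Rinf E.
Proof.
  intros [y Hy] Hm. unfold Rinf. cut (Rsup (fun z => E (- z)) <= - m); [lra|].
  apply Rsup_lub. exists (- y); rewrite Ropp_involutive; auto.
  intros z Hz. specialize (Hm _ Hz); lra.
Qed.

Lemma supnorm_ub a b g t : (exists M, forall s, in_I a b s -> Rabs (g s) <= M) ->
  in_I a b t -> Rabs (g t) <= supnorm a b g.
Proof.
  intros [M HM] Ht. unfold supnorm. apply Rsup_ub.
  - exists M. intros y [s [Hs ->]]. auto.
  - eauto.
Qed.

Lemma supnorm_lub a b g M : a <= b -> (forall s, in_I a b s -> Rabs (g s) <= M) -> supnorm a b g <= M.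
Proof.
  intros Hab HM. unfold supnorm. apply Rsup_lub.
  - exists (Rabs (g a)), a. split; [unfold in_I; lra| auto].
  - intros y [s [Hs ->]]. auto.
Qed.

Lemma supnorm_ge0 a b g : 0 <= supnorm a b g.
Proof. apply Rsup_ge0. intros y [s [_ ->]]. apply Rabs_pos. Qed.

Lemma supnorm_ub_cont a b g t : a <= b -> cont_on a b g -> in_I a b t -> Rabs (g t) <= supnorm a b g.
Proof. intros. apply supnorm_ub; auto. apply cont_on_bounded; auto. Qed.

Lemma x_mono N x : partition N x -> forall i j, (i <= j <= N)%nat -> x i <= x j.
Proof.
  intros Hp i j. induction j; intros H.
  - assert (i = 0)%nat by lia. subst; lra.
  - destruct (Nat.eq_dec i (S j)) as [->|Hn]; [lra|].
    apply Rle_trans with (x j). apply IHj; lia. left; apply Hp; lia.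
Qed.

Lemma x_lt N x : partition N x -> (1 <= N)%nat -> x 0%nat < x N.
Proof.
  intros Hp HN. apply Rlt_le_trans with (x 1%nat). apply Hp; lia. apply (x_mono N x Hp); lia.
Qed.

Lemma Linv_eq N x j y : x j - x (pred j) <> 0 ->
  Linv N x j y = x 0%nat + ((y - x (pred j)) / (x j - x (pred j))) * (x N - x 0%nat).
Proof. intros. unfold Linv. field. auto. Qed.

Lemma seg_pos N x j : partition N x -> (1 <= j <= N)%nat -> x (pred j) < x j.
Proof. intros Hp Hj. destruct j; [lia|]. apply Hp; simpl; lia. Qed.

Lemma Linv_in N x j y : partition N x -> (1 <= j <= N)%nat -> x (pred j) <= y <= x j ->
  in_I (x 0%nat) (x N) (Linv N x j y).
Proof.
  intros Hp Hj Hy. pose proof (seg_pos N x j Hp Hj). pose proof (x_lt N x Hp ltac:(lia)).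
  rewrite Linv_eq by lra. set (t := (y - x (pred j)) / (x j - x (pred j))).
  assert (0 <= t <= 1). { unfold t; split. apply Rmult_le_pos; [lra| left; apply Rinv_0_lt_compat; lra].
    apply (Rmult_le_reg_r (x j - x (pred j))); [lra|]. unfold Rdiv; rewrite Rmult_assoc, Rinv_l; lra. }
  unfold in_I; split; nra.
Qed.

Lemma Linv_hi N x j y : partition N x -> (1 <= j <= N)%nat -> x j <= y -> x N <= Linv N x j y.
Proof.
  intros Hp Hj Hy. pose proof (seg_pos N x j Hp Hj). pose proof (x_lt N x Hp ltac:(lia)).
  rewrite Linv_eq by lra. set (t := (y - x (pred j)) / (x j - x (pred j))).
  assert (1 <= t). { unfold t. apply (Rmult_le_reg_r (x j - x (pred j))); [lra|]. unfold Rdiv; rewrite Rmult_assoc, Rinv_l; lra. }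
  nra.
Qed.

Lemma Linv_lo N x j y : partition N x -> (1 <= j <= N)%nat -> y <= x (pred j) -> Linv N x j y <= x 0%nat.
Proof.
  intros Hp Hj Hy. pose proof (seg_pos N x j Hp Hj). pose proof (x_lt N x Hp ltac:(lia)).
  rewrite Linv_eq by lra. set (t := (y - x (pred j)) / (x j - x (pred j))).
  assert (t <= 0). { unfold t. apply (Rmult_le_reg_r (x j - x (pred j))); [lra|]. unfold Rdiv; rewrite Rmult_assoc, Rinv_l; lra. }
  nra.
Qed.

Lemma Linv_cont N x j : continuity (fun y => Linv N x j y).
Proof.
  unfold Linv. apply cont_plus. apply cont_cst. unfold Rdiv.
  apply cont_mult; [|apply cont_cst]. apply cont_mult; [|apply cont_cst].
  apply cont_minus; [apply cont_id| apply cont_cst].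
Qed.

Lemma find_seg N x y : partition N x -> (1 <= N)%nat -> x 0%nat <= y <= x N ->
  exists i, (1 <= i <= N)%nat /\ x (pred i) <= y <= x i.
Proof.
  intros Hp HN Hy.
  assert (forall k, (1 <= k <= N)%nat -> y <= x k -> exists i, (1 <= i <= k)%nat /\ x (pred i) <= y <= x i).
  { induction k; intros Hk Hyk; [lia|].
    destruct (Rle_dec y (x k)) as [Hl|Hl].
    - destruct k. exists 1%nat; simpl; split; [lia|lra].
      destruct (IHk ltac:(lia) Hl) as [i [Hi1 Hi2]]. exists i; split; [lia|auto].
    - exists (S k); simpl; split; [lia|lra]. }
  destruct (H N ltac:(lia) (proj2 Hy)) as [i Hi]; exists i; auto.
Qed.

Lemma alpha_max_prop alpha N : alpha_ok N alpha -> forall k, (k <= N)%nat ->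
  0 <= alpha_max alpha k < 1 /\ forall i, (1 <= i <= k)%nat -> Rabs (alpha i) <= alpha_max alpha k.
Proof.
  intros Ha k. induction k; intros Hk; simpl.
  - split; [lra| intros; lia].
  - destruct (IHk ltac:(lia)) as [[H0 H1] H2].
    assert (Rabs (alpha (S k)) < 1). { destruct (Ha (S k) ltac:(lia)). unfold Rabs; destruct Rcase_abs; lra. }
    split. unfold Rmax; destruct Rle_dec; lra.
    intros i Hi. destruct (Nat.eq_dec i (S k)) as [->|Hn]. apply Rmax_r.
    eapply Rle_trans; [apply H2; lia| apply Rmax_l].
Qed.

Lemma sum_zero (F : nat -> R) n : (forall j, (j <= n)%nat -> F j = 0) -> sum_f_R0 F n = 0.
Proof. induction n; intros H; simpl. apply H; lia. rewrite IHn, H; auto; lra. Qed.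

Lemma sum_single (F : nat -> R) n k : (k <= n)%nat -> (forall j, (j <= n)%nat -> j <> k -> F j = 0) ->
  sum_f_R0 F n = F k.
Proof.
  induction n; intros Hk H; simpl.
  - assert (k = 0)%nat by lia; subst; auto.
  - destruct (Nat.eq_dec k (S n)) as [->|Hn].
    + rewrite sum_zero; [lra|]. intros j Hj; apply H; lia.
    + rewrite IHn, (H (S n)); auto; try lia; try lra; intros; apply H; lia.
Qed.

Definition Sop N x (alpha : nat -> R) (w : R -> R) (y : R) : R :=
  sum_f_R0 (fun j => alpha (S j) * w (Linv N x (S j) y)) (pred N).

Definition Zout N x (w : R -> R) := forall y, y <= x 0%nat \/ x N <= y -> w y = 0.

Lemma Sop_cont N x alpha w : continuity w -> continuity (Sop N x alpha w).
Proof.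
  intros Hw. unfold Sop. apply (cont_sum (fun j y => alpha (S j) * w (Linv N x (S j) y))).
  intros j. apply cont_mult. apply cont_cst. apply cont_comp; auto. apply Linv_cont.
Qed.

Lemma Sop_out N x alpha w : partition N x -> (1 <= N)%nat -> Zout N x w -> Zout N x (Sop N x alpha w).
Proof.
  intros Hp HN Hw y Hy. unfold Sop. apply sum_zero. intros j Hj.
  rewrite Hw; [lra|]. destruct Hy as [Hy|Hy].
  - left. apply Linv_lo; auto; try lia. simpl. eapply Rle_trans; [exact Hy|]. apply (x_mono N x Hp); lia.
  - right. apply Linv_hi; auto; try lia. eapply Rle_trans; [|exact Hy]. apply (x_mono N x Hp); lia.
Qed.

Lemma Sop_single N x alpha w i y : partition N x -> Zout N x w -> (1 <= i <= N)%nat ->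
  x (pred i) <= y <= x i -> Sop N x alpha w y = alpha i * w (Linv N x i y).
Proof.
  intros Hp Hw Hi Hy. unfold Sop.
  rewrite (sum_single _ _ (pred i)); [| lia |].
  - replace (S (pred i)) with i by lia. reflexivity.
  - intros j Hj Hne. rewrite Hw; [lra|].
    destruct (Nat.lt_ge_cases (S j) i).
    + right. apply Linv_hi; auto; try lia. eapply Rle_trans; [|apply Hy]. apply (x_mono N x Hp); lia.
    + left. apply Linv_lo; auto; try lia. simpl. eapply Rle_trans; [apply Hy|]. apply (x_mono N x Hp); lia.
Qed.

Fixpoint Pseq N x alpha (u : R -> R) (k : nat) : R -> R :=
  match k with
  | O => fun _ => 0
  | S k => Sop N x alpha (fun y => Pseq N x alpha u k y + u y)
  end.

Lemma Un_cv_ext (U V : nat -> R) l : (forall k, U k = V k) -> Un_cv U l -> Un_cv V l.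
Proof. intros E H eps He. destruct (H eps He) as [M HM]. exists M; intros n Hn. rewrite <- E; auto. Qed.

Lemma Un_cv_shift (U : nat -> R) l : Un_cv U l -> Un_cv (fun k => U (S k)) l.
Proof. intros H eps He. destruct (H eps He) as [M HM]. exists M; intros n Hn. apply HM; lia. Qed.

Lemma Un_cv_cst c : Un_cv (fun _ => c) c.
Proof. intros eps He. exists 0%nat. intros. unfold Rdist. rewrite Rminus_diag, Rabs_R0; lra. Qed.

Lemma lim_le (U : nat -> R) l n c0 Bd : Un_cv U l -> (forall m, (m >= n)%nat -> Rabs (U m - c0) <= Bd) ->
  Rabs (l - c0) <= Bd.
Proof.
  intros Hl Hb. destruct (Rle_dec (Rabs (l - c0)) Bd) as [|Hn]; auto. exfalso.
  destruct (Hl (Rabs (l - c0) - Bd) ltac:(lra)) as [M HM].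
  specialize (HM (Nat.max M n) ltac:(lia)). specialize (Hb (Nat.max M n) ltac:(lia)).
  unfold Rdist in HM.
  pose proof (Rabs_triang (l - U (Nat.max M n)) (U (Nat.max M n) - c0)).
  replace (l - U (Nat.max M n) + (U (Nat.max M n) - c0)) with (l - c0) in H by ring.
  rewrite Rabs_minus_sym in HM. lra.
Qed.

Lemma fractal_exists N x alpha (u : R -> R) V :
  partition N x -> (1 <= N)%nat -> alpha_ok N alpha ->
  continuity u -> Zout N x u -> (forall y, Rabs (u y) <= V) ->
  exists h, continuity h /\
    (forall y, Rabs (h y) <= alpha_max alpha N * V / (1 - alpha_max alpha N)) /\
    (forall i y, (1 <= i <= N)%nat -> x (pred i) <= y <= x i ->
       h y = alpha i * (h (Linv N x i y) + u (Linv N x i y))).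
Proof.
  intros Hp HN Ha Hu Zu Hb.
  destruct (alpha_max_prop alpha N Ha N (le_n _)) as [[Ha0 Ha1] Hai].
  set (a := alpha_max alpha N) in *.
  assert (HV : 0 <= V) by (eapply Rle_trans; [apply Rabs_pos| apply (Hb 0)]).
  set (c := a * V / (1 - a)).
  assert (Hc : 0 <= c) by (unfold c, Rdiv; apply Rmult_le_pos; [nra| left; apply Rinv_0_lt_compat; lra]).
  assert (Hcc : a * (c + V) = c) by (unfold c; field; lra).
  set (P := Pseq N x alpha u).
  assert (PZ : forall k, continuity (P k) /\ Zout N x (P k)).
  { induction k; unfold P; simpl.
    - split. apply cont_cst. intros y _; reflexivity.
    - destruct IHk as [IH1 IH2]. split.
      + apply Sop_cont. apply cont_plus; auto.
      + apply Sop_out; auto. intros y Hy. unfold P in IH2. rewrite IH2, Zu; auto; lra. }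
  assert (Pstep : forall k i y, (1 <= i <= N)%nat -> x (pred i) <= y <= x i ->
     P (S k) y = alpha i * (P k (Linv N x i y) + u (Linv N x i y))).
  { intros k i y Hi Hy. simpl. apply (Sop_single N x alpha (fun y => P k y + u y) i y); auto.
    intros z Hz. rewrite (proj2 (PZ k)), Zu; auto; lra. }
  assert (Hcase : forall y, (exists i, (1 <= i <= N)%nat /\ x (pred i) <= y <= x i) \/ (y <= x 0%nat \/ x N <= y)).
  { intros y. destruct (Rle_dec (x 0%nat) y); destruct (Rle_dec y (x N)).
    - left. apply find_seg; auto.
    - right; right; lra.
    - right; left; lra.
    - right; left; lra. }
  assert (Pbd : forall k y, Rabs (P k y) <= c).
  { induction k; intros y.
    - change (P 0%nat y) with 0. rewrite Rabs_R0; auto.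
    - destruct (Hcase y) as [[i [Hi Hy]]|Hy].
      + rewrite (Pstep k i y Hi Hy), Rabs_mult.
        pose proof (Hai i Hi). pose proof (Rabs_triang (P k (Linv N x i y)) (u (Linv N x i y))).
        pose proof (IHk (Linv N x i y)). pose proof (Hb (Linv N x i y)).
        pose proof (Rabs_pos (alpha i)). pose proof (Rabs_pos (P k (Linv N x i y) + u (Linv N x i y))).
        nra.
      + rewrite (proj2 (PZ (S k))); auto. rewrite Rabs_R0; auto. }
  assert (Pdiff : forall k y, Rabs (P (S k) y - P k y) <= a ^ k * c).
  { induction k; intros y.
    - change (P 0%nat y) with 0. simpl. rewrite Rminus_0_r, Rmult_1_l. apply Pbd.
    - destruct (Hcase y) as [[i [Hi Hy]]|Hy].
      + rewrite (Pstep (S k) i y Hi Hy), (Pstep k i y Hi Hy).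
        replace (alpha i * (P (S k) (Linv N x i y) + u (Linv N x i y)) - alpha i * (P k (Linv N x i y) + u (Linv N x i y)))
          with (alpha i * (P (S k) (Linv N x i y) - P k (Linv N x i y))) by ring.
        rewrite Rabs_mult. pose proof (Hai i Hi). pose proof (IHk (Linv N x i y)).
        pose proof (Rabs_pos (alpha i)). pose proof (Rabs_pos (P (S k) (Linv N x i y) - P k (Linv N x i y))).
        simpl. nra.
      + rewrite (proj2 (PZ (S (S k)))), (proj2 (PZ (S k))); auto. rewrite Rminus_0_r, Rabs_R0.
        apply Rmult_le_pos; auto. apply pow_le; lra. }
  set (B := fun m => a ^ m * c / (1 - a)).
  assert (HB : forall n p y, Rabs (P (n + p)%nat y - P n y) <= B n - B (n + p)%nat).
  { intros n p y. induction p.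
    - rewrite Nat.add_0_r, Rminus_diag, Rabs_R0, Rminus_diag; lra.
    - replace (n + S p)%nat with (S (n + p)) by lia.
      pose proof (Rabs_triang (P (S (n + p)) y - P (n + p)%nat y) (P (n + p)%nat y - P n y)).
      replace (P (S (n + p)) y - P (n + p)%nat y + (P (n + p)%nat y - P n y)) with (P (S (n+p)) y - P n y) in H by ring.
      pose proof (Pdiff (n + p)%nat y).
      assert (B (n + p)%nat - B (S (n + p)) = a ^ (n + p) * c) by (unfold B; simpl; field; lra).
      lra. }
  assert (HB0 : forall m, 0 <= B m).
  { intros m. unfold B, Rdiv. apply Rmult_le_pos; [apply Rmult_le_pos; auto; apply pow_le; lra| left; apply Rinv_0_lt_compat; lra]. }
  assert (HBsmall : forall eps, 0 < eps -> exists M, forall n, (n >= M)%nat -> B n < eps).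
  { intros eps He.
    assert (Hra : Rabs a < 1) by (rewrite Rabs_right; lra).
    destruct (pow_lt_1_zero a Hra (eps * (1 - a) / (c + 1))) as [M HM].
    { apply Rdiv_lt_0_compat; [nra| lra]. }
    exists M. intros n Hn. specialize (HM n Hn). rewrite Rabs_right in HM by (apply Rle_ge, pow_le; lra).
    unfold B. apply (Rmult_lt_reg_r (1 - a)); [lra|].
    unfold Rdiv. rewrite Rmult_assoc, Rinv_l by lra. rewrite Rmult_1_r.
    apply (Rmult_lt_compat_r (c + 1)) in HM; [|lra].
    unfold Rdiv in HM. rewrite Rmult_assoc, Rinv_l, Rmult_1_r in HM by lra.
    pose proof (pow_le a n ltac:(lra)). nra. }
  assert (HD : forall n m y, (m >= n)%nat -> Rabs (P m y - P n y) <= B n).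
  { intros n m y Hm. replace m with (n + (m - n))%nat by lia. pose proof (HB n (m - n)%nat y).
    pose proof (HB0 (n + (m - n))%nat). lra. }
  assert (HC : forall y, Cauchy_crit (fun k => P k y)).
  { intros y eps He. destruct (HBsmall eps He) as [M HM]. exists M. intros n m Hn Hm. unfold Rdist.
    destruct (Nat.le_ge_cases n m).
    - rewrite Rabs_minus_sym. eapply Rle_lt_trans; [apply HD; lia| apply HM; lia].
    - eapply Rle_lt_trans; [apply HD; lia| apply HM; lia]. }
  pose (h := fun y => proj1_sig (R_complete _ (HC y))).
  assert (Hh : forall y, Un_cv (fun k => P k y) (h y)).
  { intros y. unfold h. destruct (R_complete _ (HC y)); auto. }
  assert (HhP : forall n y, Rabs (h y - P n y) <= B n).
  { intros n y. apply (lim_le _ _ n _ _ (Hh y)). intros m Hm; apply HD; lia. }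
  exists h. split; [|split].
  - intros y. apply (CVU_continuity P h y (mkposreal 1 Rlt_0_1)).
    + intros eps He. destruct (HBsmall eps He) as [M HM]. exists M. intros n z Hn _.
      eapply Rle_lt_trans; [apply HhP| apply HM; lia].
    + intros n z _. apply (proj1 (PZ n)).
    + unfold Boule; simpl. rewrite Rminus_diag, Rabs_R0; lra.
  - intros y. fold c. replace (h y) with (h y - 0) by ring.
    apply (lim_le _ _ 0 _ _ (Hh y)). intros m _. rewrite Rminus_0_r. apply Pbd.
  - intros i y Hi Hy. apply (UL_sequence (fun k => P (S k) y)).
    + apply (Un_cv_shift (fun k => P k y)), Hh.
    + apply (Un_cv_ext (fun k => alpha i * (P k (Linv N x i y) + u (Linv N x i y)))).
      { intros k; symmetry; apply Pstep; auto. }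
      apply CV_mult. apply Un_cv_cst. apply CV_plus. apply Hh. apply Un_cv_cst.
Qed.

Lemma cont_on_minus a b f g : a <= b -> cont_on a b f -> cont_on a b g -> cont_on a b (fun t => f t - g t).
Proof.
  intros Hab Hf Hg. apply clamp_cont_on. apply (cont_minus (fun t => f (clamp a b t)) (fun t => g (clamp a b t)));
  apply cont_on_clamp; auto.
Qed.

Lemma cont_on_plus a b f g : a <= b -> cont_on a b f -> cont_on a b g -> cont_on a b (fun t => f t + g t).
Proof.
  intros Hab Hf Hg. apply clamp_cont_on. apply (cont_plus (fun t => f (clamp a b t)) (fun t => g (clamp a b t)));
  apply cont_on_clamp; auto.
Qed.

Lemma cont_on_scal a b k f : a <= b -> cont_on a b f -> cont_on a b (fun t => k * f t).
Proof.
  intros Hab Hf. apply clamp_cont_on. apply (cont_mult (fun _ => k) (fun t => f (clamp a b t)));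
  [apply cont_cst| apply cont_on_clamp; auto].
Qed.

Lemma poly_cont k p : is_poly k p -> continuity p.
Proof.
  intros [c Hc]. apply (cont_ext (fun t => sum_f_R0 (fun j => c j * t ^ j) k)); [intros; symmetry; auto|].
  apply (cont_sum (fun j t => c j * t ^ j)). intros j. apply cont_mult. apply cont_cst. apply cont_pow.
Qed.

Lemma Rat_cont a b m n r : Rat a b m n r -> cont_on a b r.
Proof.
  intros [p [q [Hp [Hq [Hpos Hr]]]]] t Ht eps He.
  assert (continuity_pt (p / q)%F t).
  { apply continuity_pt_div. apply (poly_cont m p Hp). apply (poly_cont n q Hq). specialize (Hpos t Ht); lra. }
  destruct (cpt_elim _ _ H eps He) as [d [Hd Hs]]. exists d; split; auto.
  intros s Hs1 Hs2. rewrite !Hr; auto. apply Hs; auto.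
Qed.

Lemma op_bound a b L : a < b -> admissible_L a b L ->
  forall r, cont_on a b r ->
  supnorm a b (fun t => r t - L r t) <= opnorm_IdmL a b L * supnorm a b r.
Proof.
  intros Hab [HLc [HLloc [HLadd [HLscal [[K HK] HLend]]]]] r Hr.
  assert (Hab' : a <= b) by lra.
  set (E := fun y => exists g, cont_on a b g /\ supnorm a b g <= 1 /\ y = supnorm a b (fun t => g t - L g t)).
  assert (Ebd : bound E).
  { exists (1 + Rabs K). intros y [g [Hg [Hg1 ->]]]. apply supnorm_lub; auto. intros t Ht.
    pose proof (Rabs_triang (g t) (- L g t)). rewrite Rabs_Ropp in H.
    pose proof (supnorm_ub_cont a b g t Hab' Hg Ht). pose proof (supnorm_ub_cont a b (L g) t Hab' (HLc g Hg) Ht).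
    pose proof (HK g Hg). pose proof (supnorm_ge0 a b g).
    assert (K * supnorm a b g <= Rabs K) by (unfold Rabs; destruct Rcase_abs; nra).
    unfold Rminus. lra. }
  pose proof (supnorm_ge0 a b r) as Hnr0.
  destruct (Rle_lt_or_eq_dec _ _ Hnr0) as [Hpos|H0].
  - set (nr := supnorm a b r) in *.
    set (g := fun s => / nr * r s).
    assert (Hg : cont_on a b g) by (apply cont_on_scal; auto).
    assert (Hg1 : supnorm a b g <= 1).
    { apply supnorm_lub; auto. intros t Ht. unfold g. rewrite Rabs_mult, Rabs_right by (left; apply Rinv_0_lt_compat; auto).
      pose proof (supnorm_ub_cont a b r t Hab' Hr Ht). fold nr in H.
      apply (Rmult_le_reg_l nr); auto. rewrite <- Rmult_assoc, Rinv_r; lra. }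
    assert (Hop : supnorm a b (fun t => g t - L g t) <= opnorm_IdmL a b L).
    { apply Rsup_ub; auto. exists g; auto. }
    assert (HgL : cont_on a b (fun t => g t - L g t)) by (apply cont_on_minus; auto).
    apply Rle_trans with (nr * supnorm a b (fun t => g t - L g t)); [| rewrite (Rmult_comm (opnorm_IdmL a b L)); apply Rmult_le_compat_l; lra].
    apply supnorm_lub; auto. intros t Ht.
    pose proof (supnorm_ub_cont a b _ t Hab' HgL Ht). simpl in H.
    unfold g in H. rewrite (HLscal (/ nr) r Hr t Ht) in H.
    replace (/ nr * r t - / nr * L r t) with (/ nr * (r t - L r t)) in H by ring.
    rewrite Rabs_mult, Rabs_right in H by (left; apply Rinv_0_lt_compat; auto).
    apply (Rmult_le_compat_l nr) in H; [|lra]. rewrite <- Rmult_assoc, Rinv_r, Rmult_1_l in H by lra. exact H.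
  - rewrite <- H0, Rmult_0_r. apply supnorm_lub; auto. intros t Ht.
    assert (Hz : forall s, in_I a b s -> r s = 0).
    { intros s Hs. pose proof (supnorm_ub_cont a b r s Hab' Hr Hs). rewrite <- H0 in H.
      pose proof (Rabs_pos (r s)). destruct (Req_dec (r s) 0); auto. pose proof (Rabs_pos_lt _ H2); lra. }
    assert (L r t = 0).
    { rewrite (HLloc r (fun s => 0 * r s) Hr (cont_on_scal a b 0 r Hab' Hr)); auto.
      rewrite HLscal; auto; ring. intros s Hs; rewrite Hz; auto; ring. }
    rewrite H, Hz; auto. rewrite Rminus_0_r, Rabs_R0; lra.
Qed.

Lemma fractal_r N x alpha L r :
  partition N x -> (1 <= N)%nat -> alpha_ok N alpha -> admissible_L (x 0%nat) (x N) L ->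
  cont_on (x 0%nat) (x N) r ->
  exists g, is_fractal N x alpha r (L r) g /\
    forall t, in_I (x 0%nat) (x N) t -> Rabs (g t - r t) <=
      alpha_max alpha N * supnorm (x 0%nat) (x N) (fun t => r t - L r t) / (1 - alpha_max alpha N).
Proof.
  intros Hp HN Ha HL Hr.
  pose proof (x_lt N x Hp HN) as Hlt. assert (Hab : x 0%nat <= x N) by lra.
  set (a0 := x 0%nat) in *. set (b0 := x N) in *.
  destruct HL as [HLc [HLloc [HLadd [HLscal [HK HLend]]]]].
  set (v := fun t => r t - L r t).
  assert (Hv : cont_on a0 b0 v) by (apply cont_on_minus; auto).
  set (u := fun t => v (clamp a0 b0 t)).
  assert (Hu : continuity u) by (apply cont_on_clamp; auto).
  assert (Zu : Zout N x u).
  { intros y [Hy|Hy]; unfold u, v.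
    - rewrite clamp_lo by auto. destruct (HLend r Hr) as [E _]. fold a0 b0 in E. rewrite E; ring.
    - rewrite clamp_hi by auto. destruct (HLend r Hr) as [_ E]. fold a0 b0 in E. rewrite E; ring. }
  assert (Hb : forall y, Rabs (u y) <= supnorm a0 b0 v).
  { intros y. unfold u. apply (supnorm_ub_cont _ _ v); auto. apply clamp_in; auto. }
  destruct (fractal_exists N x alpha u _ Hp HN Ha Hu Zu Hb) as [h [Hh1 [Hh2 Hh3]]].
  exists (fun t => r t + h t). split; [split|].
  - apply cont_on_plus; auto. apply cont_cont_on; auto.
  - intros i Hi y Hy. rewrite (Hh3 i y Hi Hy). unfold u.
    rewrite clamp_id by (apply Linv_in; auto). unfold v. ring.
  - intros t Ht. replace (r t + h t - r t) with (h t) by ring. apply Hh2.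
Qed.

Theorem mainTheorem8 (N : nat) (x : nat -> R) (alpha : nat -> R)
    (L : (R -> R) -> (R -> R)) (f : R -> R) (m n : nat) :
  (2 <= N)%nat ->
  partition N x ->
  alpha_ok N alpha ->
  admissible_L (x 0%nat) (x N) L ->
  cont_on (x 0%nat) (x N) f ->
  distS (x 0%nat) (x N) f (Rat_alpha N x alpha L m n)
  <= distS (x 0%nat) (x N) f (Rat (x 0%nat) (x N) m n)
     + alpha_max alpha N / (1 - alpha_max alpha N)
       * opnorm_IdmL (x 0%nat) (x N) L
       * (distS (x 0%nat) (x N) f (Rat (x 0%nat) (x N) m n)
          + supnorm (x 0%nat) (x N) f).
Proof.
  intros HN Hp Ha HL Hf.
  assert (HN1 : (1 <= N)%nat) by lia.
  pose proof (x_lt N x Hp HN1) as Hlt. assert (Hab : x 0%nat <= x N) by lra.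
  destruct (alpha_max_prop alpha N Ha N (le_n _)) as [[Ha0 Ha1] _].
  set (a := alpha_max alpha N) in *.
  set (Op := opnorm_IdmL (x 0%nat) (x N) L).
  assert (HOp : 0 <= Op).
  { apply Rsup_ge0. intros y [g [_ [_ ->]]]. apply supnorm_ge0. }
  set (c := a / (1 - a) * Op).
  assert (Hc : 0 <= c).
  { unfold c. apply Rmult_le_pos; auto. unfold Rdiv. apply Rmult_le_pos; auto. left; apply Rinv_0_lt_compat; lra. }
  set (nf := supnorm (x 0%nat) (x N) f).
  set (Ea := fun y => exists s, Rat_alpha N x alpha L m n s /\ y = supnorm (x 0%nat) (x N) (fun t => f t - s t)).
  set (Er := fun y => exists s, Rat (x 0%nat) (x N) m n s /\ y = supnorm (x 0%nat) (x N) (fun t => f t - s t)).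
  assert (Key : forall d, Er d -> Rinf Ea <= d + c * (d + nf)).
  { intros d [r [Hr ->]].
    pose proof (Rat_cont _ _ _ _ _ Hr) as Hrc.
    destruct (fractal_r N x alpha L r Hp HN1 Ha HL Hrc) as [g [Hg Hgb]].
    fold a in Hgb.
    set (d := supnorm (x 0%nat) (x N) (fun t => f t - r t)).
    set (V := supnorm (x 0%nat) (x N) (fun t => r t - L r t)) in *.
    assert (Hfr : cont_on (x 0%nat) (x N) (fun t => f t - r t)) by (apply cont_on_minus; auto).
    assert (HV : V <= Op * supnorm (x 0%nat) (x N) r) by (apply op_bound; auto).
    assert (Hnr : supnorm (x 0%nat) (x N) r <= d + nf).
    { apply supnorm_lub; auto. intros t Ht.
      pose proof (supnorm_ub_cont _ _ _ t Hab Hfr Ht). pose proof (supnorm_ub_cont _ _ _ t Hab Hf Ht).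
      pose proof (Rabs_triang (r t - f t) (f t)). replace (r t - f t + f t) with (r t) in H1 by ring.
      rewrite Rabs_minus_sym in H1. fold d nf in H, H0. lra. }
    apply Rle_trans with (supnorm (x 0%nat) (x N) (fun t => f t - g t)).
    { apply (Rinf_lb _ 0). intros z [s [_ ->]]. apply supnorm_ge0. exists g; split; auto. exists r; split; auto. }
    apply supnorm_lub; auto. intros t Ht.
    pose proof (supnorm_ub_cont _ _ _ t Hab Hfr Ht). fold d in H. pose proof (Hgb t Ht).
    pose proof (Rabs_triang (f t - r t) (- (g t - r t))). rewrite Rabs_Ropp in H1.
    replace (f t - r t + - (g t - r t)) with (f t - g t) in H1 by ring.
    assert (a * V / (1 - a) <= c * (d + nf)).
    { unfold c. replace (a * V / (1 - a)) with (a / (1 - a) * V) by (field; lra).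
      rewrite Rmult_assoc. apply Rmult_le_compat_l.
      unfold Rdiv. apply Rmult_le_pos; auto. left; apply Rinv_0_lt_compat; lra.
      eapply Rle_trans; [exact HV|]. apply Rmult_le_compat_l; auto. }
    lra. }
  assert (HEr : exists y, Er y).
  { exists (supnorm (x 0%nat) (x N) (fun t => f t - 0)), (fun _ => 0). split; auto.
    exists (fun _ => 0), (fun _ => 1). split; [|split; [|split]].
    - exists (fun _ => 0). intros t. symmetry. apply sum_zero. intros; ring.
    - exists (fun j => match j with O => 1 | _ => 0 end). intros t.
      rewrite (sum_single _ _ 0); [simpl; ring| lia|]. intros j _ Hj. destruct j; [lia| ring].
    - intros; lra.
    - intros; field. }
  assert (Hglb : (Rinf Ea - c * nf) / (1 + c) <= Rinf Er).
  { apply Rinf_glb; auto. intros z Hz. specialize (Key z Hz).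
    apply (Rmult_le_reg_r (1 + c)); [lra|]. unfold Rdiv. rewrite Rmult_assoc, Rinv_l by lra. lra. }
  fold nf. fold c. unfold distS. fold Ea Er.
  apply (Rmult_le_compat_r (1 + c)) in Hglb; [|lra].
  unfold Rdiv in Hglb. rewrite Rmult_assoc, Rinv_l, Rmult_1_r in Hglb by lra.
  replace (a / (1 - a) * Op) with c by reflexivity. nra.
Qed.
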